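(* If $M$ is a Noetherian commutative monoid, then the terminal space $\mathcal S(M)$ is a Noetherian topological space (every descending chain of closed subsets stabilizes).
   Context: A monoid is a commutative monoid $(M,\cdot,1)$. An ideal of $M$ is a subset $I\subseteq M$ such that $im\in I$ for all $i\in I$, $m\in M$; it is proper if $I\neq M$. $M$ is Noetherian if it satisfies the ascending chain condition on ideals. A proper ideal $K$ of $M$ is strongly irreducible if for all ideals $I,J$ of $M$, $I\cap J\subseteq K$ implies $I\subseteq K$ or $J\subseteq K$. $\mathcal S(M)$ is the set of all strongly irreducible ideals of $M$. For $X\subseteq\mathcal S(M)$, $\mathcal K(X)=\bigcap_{I\in X}I$, and $\mathcal{HK}(X)=\{J\in\mathcal S(M)\mid J\supseteq\mathcal K(X)\}$ if $X\neq\emptyset$, $\mathcal{HK}(\emptyset)=\emptyset$. The terminal space of $M$ is the set $\mathcal S(M)$ with the topology whose closed sets are exactly the sets $\mathcal{HK}(X)$, $X\subseteq\mathcal S(M)$. *)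

(* Defs.v *)
(* subsets are predicates [A -> Prop], compared extensionally. *)

Record ComMonoid := {
  carrier :> Type;
  mul : carrier -> carrier -> carrier;
  one : carrier;
  mulA : forall x y z, mul x (mul y z) = mul (mul x y) z;
  mulC : forall x y, mul x y = mul y x;
  mul1m : forall x, mul one x = x
}.

Section Defs.
Variable M : ComMonoid.

Definition subset (A B : M -> Prop) : Prop := forall x, A x -> B x.

Definition ideal (I : M -> Prop) : Prop :=
  forall i m, I i -> I (mul M i m).

Definition proper (I : M -> Prop) : Prop := ~ (forall x : M, I x).

Definition noetherian_monoid : Prop :=
  forall I : nat -> M -> Prop,
    (forall n, ideal (I n)) ->
    (forall n, subset (I n) (I (S n))) ->
    exists N, forall n, N <= n -> forall x, I n x <-> I N x.

Definition strongly_irreducible (K : M -> Prop) : Prop :=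
  ideal K /\ proper K /\
  forall I J : M -> Prop, ideal I -> ideal J ->
    subset (fun x => I x /\ J x) K -> subset I K \/ subset J K.

Definition Kop (X : (M -> Prop) -> Prop) : M -> Prop :=
  fun m => forall I, X I -> I m.

(** HK(X) = { J in S(M) | J ⊇ K(X) } if X nonempty, and ∅ if X = ∅. *)
Definition HK (X : (M -> Prop) -> Prop) : (M -> Prop) -> Prop :=
  fun J => (exists I, X I) /\ strongly_irreducible J /\ subset (Kop X) J.

Definition terminal_closed (C : (M -> Prop) -> Prop) : Prop :=
  exists X : (M -> Prop) -> Prop,
    (forall I, X I -> strongly_irreducible I) /\
    (forall J, C J <-> HK X J).

Definition terminal_space_noetherian : Prop :=
  forall C : nat -> (M -> Prop) -> Prop,
    (forall n, terminal_closed (C n)) ->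
    (forall n, forall J, C (S n) J -> C n J) ->
    exists N, forall n, N <= n -> forall J, C n J <-> C N J.

End Defs.

(* Main.v *)
Require Import Defs.
From Stdlib Require Import Classical Arith Lia.

Lemma closed_char (M : ComMonoid) (C : (M -> Prop) -> Prop) :
  terminal_closed M C -> forall J, C J <->
    ((exists I, C I) /\ strongly_irreducible M J /\ subset M (Kop M C) J).
Proof.
  intros [X [HX HC]] J.
  assert (XC : forall I, X I -> C I).
  { intros I HI. apply HC. split; [exists I; exact HI|]. split; [now apply HX|].
    intros x Hx. apply Hx, HI. }
  split.
  - intros HJ. pose proof HJ as HJ'. apply HC in HJ' as [[I HI] [SJ KJ]].
    split; [exists I; now apply XC|]. split; [exact SJ|].
    intros x Hx. apply KJ. intros I' HI'. apply Hx, XC, HI'.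
  - intros [[I0 HI0] [SJ KJ]]. apply HC. apply HC in HI0 as [HXne _].
    split; [exact HXne|]. split; [exact SJ|].
    intros x Hx. apply KJ. intros I HI. apply HC in HI as [_ [_ H]]. apply H, Hx.
Qed.

Theorem proposition2p10 (M : ComMonoid) :
  noetherian_monoid M -> terminal_space_noetherian M.
Proof.
  intros HN C Hcl Hdesc.
  assert (Hd : forall k n J, C (n + k) J -> C n J).
  { induction k; intros n J H. - now rewrite Nat.add_0_r in H.
    - apply IHk. apply Hdesc. now rewrite <- Nat.add_succ_r. }
  destruct (HN (fun n => Kop M (C n))) as [N HNst].
  - intros n i m Hi I HI. apply (proj1 (proj2 (proj1 (closed_char M _ (Hcl n) I) HI))).
    apply Hi, HI.
  - intros n x Hx I HI. apply Hx, Hdesc, HI.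
  - exists N. intros n Hn J. split.
    + intros H. replace n with (N + (n - N)) in H by lia. exact (Hd _ _ _ H).
    + intros H. pose proof H as H'. apply (closed_char M _ (Hcl N)) in H' as [_ [SJ KJ]].
      apply (closed_char M _ (Hcl n)). split; [|split; [exact SJ|]].
      * apply NNPP. intros Hne. destruct SJ as [_ [Hp _]]. apply Hp. intros x.
        apply KJ. apply (proj1 (HNst n Hn x)). intros I HI. exfalso. apply Hne. exists I; exact HI.
      * intros x Hx. apply KJ. apply (proj1 (HNst n Hn x)), Hx.
Qed.
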